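(* For real parameters $a,\epsilon$, let $Q_{a,\epsilon}$ be the region bounded by the segment from $(0,0)$ to $(1,0)$, the segment from $(0,0)$ to $(0,\tfrac12)$, the segment from $(1,0)$ to $(1,\tfrac12+a)$, and the curve $y(x)=\epsilon x^2+(a-\epsilon)x+\tfrac12$, $x\in[0,1]$. For $p,q$ near $\tfrac12$ and $\theta$ near $0$, let $\Gamma(p,q,\theta)$ be the circular arc of central angle $\theta$ joining $(q,0)$ and $(p,y(p))$, with radius $R=\frac{\sqrt{(q-p)^2+y(p)^2}}{2\sin(\theta/2)}$ (for $\theta=0$, the straight segment), and define $$A_{\mathrm{tot}}=\int_0^1 y(x)\,dx,\quad A_1=\int_0^p y(x)\,dx+\tfrac12 y(p)(q-p)+\tfrac12R^2\theta-\tfrac14\big[(q-p)^2+y(p)^2\big]\cot(\theta/2),\quad A_2=A_{\mathrm{tot}}-A_1,$$ (the left and right areas into which $\Gamma$ divides $Q_{a,\epsilon}$, with $\theta>0$ meaning the circular cap is added to the left region), and $$\mathrm{RC}(p,q,\theta;a,\epsilon)=\frac{R\,\theta}{A_1A_2}.$$ Then $\mathrm{RC}$ extends smoothly to a neighborhood of $(p,q,\theta;a,\epsilon)=(\tfrac12,\tfrac12,0;0,0)$; at $a=\epsilon=0$ the point $(p,q,\theta)=(\tfrac12,\tfrac12,0)$ is a nondegenerate local minimum with Hessian in the variables $(q,p,\theta)$ equal to $$\begin{pmatrix}48&-16&\tfrac43\\-16&48&\tfrac43\\ \tfrac43&\tfrac43&\tfrac79\end{pmatrix};$$ and for $\epsilon=0$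 and $a$ small, the critical point $(q,p,\theta)$ of $\mathrm{RC}(\cdot;a,0)$ near $(\tfrac12,\tfrac12,0)$ satisfies $$\Big(q-\tfrac12,\;p-\tfrac12,\;\theta\Big)=a\Big(\tfrac1{12},\;-\tfrac16,\;1\Big)+O(a^2).$$
   Context: $\mathrm{RC}$ is the Ratio Cut quotient $\mathcal H^1(\Gamma)/(|S|\,|Q\setminus S|)$ (length of the cut divided by the product of the two areas) restricted to circular-arc cuts parametrized by their endpoints $(q,0)$, $(p,y(p))$ and central angle $\theta$. *)

(* Defs.v *)
From Stdlib Require Import Reals Lra.
Open Scope R_scope.

Definition ycurve (a eps x : R) : R := eps * x ^ 2 + (a - eps) * x + / 2.

Lemma ycurve_cont (a eps : R) : continuity (ycurve a eps).
Proof. unfold ycurve. reg. Qed.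

Definition integ (f : R -> R) (Hf : continuity f) (u v : R) : R :=
  match Rle_dec u v with
  | left H => RiemannInt (continuity_implies_RiemannInt H (fun x _ => Hf x))
  | right H => - RiemannInt (continuity_implies_RiemannInt
                   (Rlt_le _ _ (Rnot_le_lt _ _ H)) (fun x _ => Hf x))
  end.

Definition yint (a eps u v : R) : R := integ (ycurve a eps) (ycurve_cont a eps) u v.

Definition Atot (a eps : R) : R := yint a eps 0 1.

Definition chord2 (a eps p q : R) : R := (q - p) ^ 2 + (ycurve a eps p) ^ 2.

Definition Rad (a eps p q th : R) : R := sqrt (chord2 a eps p q) / (2 * sin (th / 2)).

Definition arclen (p q th a eps : R) : R :=
  if Req_EM_T th 0 then sqrt (chord2 a eps p q) else Rad a eps p q th * th.

Definition A1 (p q th a eps : R) : R :=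
  if Req_EM_T th 0 then
    yint a eps 0 p + / 2 * ycurve a eps p * (q - p)
  else
    yint a eps 0 p + / 2 * ycurve a eps p * (q - p)
    + / 2 * (Rad a eps p q th) ^ 2 * th
    - / 4 * chord2 a eps p q * (cos (th / 2) / sin (th / 2)).

Definition A2 (p q th a eps : R) : R := Atot a eps - A1 p q th a eps.

Definition RC (p q th a eps : R) : R :=
  arclen p q th a eps / (A1 p q th a eps * A2 p q th a eps).

Record pt5 : Type := mk5 { cq : R; cp : R; cth : R; ca : R; ceps : R }.

Definition RCpt (x : pt5) : R := RC (cp x) (cq x) (cth x) (ca x) (ceps x).

Definition x0 : pt5 := mk5 (/ 2) (/ 2) 0 0 0.

Definition dist5 (x y : pt5) : R :=
  Rmax (Rabs (cq x - cq y)) (Rmax (Rabs (cp x - cp y)) (Rmax (Rabs (cth x - cth y))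
    (Rmax (Rabs (ca x - ca y)) (Rabs (ceps x - ceps y))))).

Definition open5 (U : pt5 -> Prop) : Prop :=
  forall x, U x -> exists d, 0 < d /\ forall y, dist5 x y < d -> U y.

Definition cont5_at (f : pt5 -> R) (x : pt5) : Prop :=
  forall e, 0 < e -> exists d, 0 < d /\ forall y, dist5 x y < d -> Rabs (f y - f x) < e.

Definition shift (i : nat) (h : R) (x : pt5) : pt5 :=
  match i with
  | 0%nat => mk5 (cq x + h) (cp x) (cth x) (ca x) (ceps x)
  | 1%nat => mk5 (cq x) (cp x + h) (cth x) (ca x) (ceps x)
  | 2%nat => mk5 (cq x) (cp x) (cth x + h) (ca x) (ceps x)
  | 3%nat => mk5 (cq x) (cp x) (cth x) (ca x + h) (ceps x)
  | _ => mk5 (cq x) (cp x) (cth x) (ca x) (ceps x + h)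
  end.

Definition partial (i : nat) (f : pt5 -> R) (x : pt5) (l : R) : Prop :=
  derivable_pt_lim (fun h => f (shift i h x)) 0 l.

Fixpoint Ck (k : nat) (U : pt5 -> Prop) (f : pt5 -> R) : Prop :=
  match k with
  | 0%nat => forall x, U x -> cont5_at f x
  | S k' => (forall x, U x -> cont5_at f x) /\
            exists D : nat -> pt5 -> R,
              (forall i x, (i < 5)%nat -> U x -> partial i f x (D i x)) /\
              (forall i, (i < 5)%nat -> Ck k' U (D i))
  end.

Definition smooth_on (U : pt5 -> Prop) (f : pt5 -> R) : Prop := forall k, Ck k U f.

Definition Hess (i j : nat) : R :=
  match i, j with
  | 0%nat, 0%nat => 48 | 0%nat, 1%nat => -16 | 0%nat, 2%nat => 4 / 3
  | 1%nat, 0%nat => -16 | 1%nat, 1%nat => 48 | 1%nat, 2%nat => 4 / 3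
  | 2%nat, 0%nat => 4 / 3 | 2%nat, 1%nat => 4 / 3 | 2%nat, 2%nat => 7 / 9
  | _, _ => 0
  end.

Definition crit_a (a : R) (x : pt5) : Prop :=
  ca x = a /\ ceps x = 0 /\ forall i, (i < 3)%nat -> partial i RCpt x 0.

(* Main.v *)
From Coquelicot Require Import Coquelicot.
From Stdlib Require Import Reals Lra Lia QArith Qreals List.
Require Import Defs.
Open Scope R_scope.


Definition cSS (n : nat) : R := sin_n n.
Definition cTT (n : nat) : R := - sin_n (S n).

Lemma CV_SS : CV_radius cSS = p_infty.
Proof.
  apply CV_radius_infinite_DAlembert.
  - intro n; apply sin_no_R0.
  - apply is_lim_seq_Reals. apply Alembert_sin.
Qed.

Lemma CV_TT : CV_radius cTT = p_infty.
Proof.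
  apply CV_radius_infinite_DAlembert.
  - intro n; unfold cTT. apply Ropp_neq_0_compat, sin_no_R0.
  - apply is_lim_seq_Reals.
    pose proof Alembert_sin as H.
    intros e He. destruct (H e He) as [N HN]. exists N. intros n Hn. idtac.
    unfold cTT. replace (- sin_n (S (S n)) / - sin_n (S n)) with (sin_n (S (S n)) / sin_n (S n)).
    + apply HN. lia.
    + field. apply sin_no_R0.
Qed.

Fixpoint itd (a : nat -> R) (n : nat) : nat -> R :=
  match n with O => a | S m => PS_derive (itd a m) end.

Lemma CV_itd a n : CV_radius a = p_infty -> CV_radius (itd a n) = p_infty.
Proof. intro H; induction n; simpl; auto. rewrite CV_radius_derive; auto. Qed.

Definition fam (k n : nat) (z : R) : R :=
  match k with O => PSeries (itd cSS n) z | _ => PSeries (itd cTT n) z end.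

Lemma fam_der k n z : derivable_pt_lim (fam k n) z (fam k (S n) z).
Proof.
  apply is_derive_Reals. destruct k; simpl; apply is_derive_PSeries;
  [rewrite CV_itd by apply CV_SS | rewrite CV_itd by apply CV_TT]; simpl; auto.
Qed.

Lemma fam_cont k n z : continuity_pt (fam k n) z.
Proof. apply derivable_continuous_pt. exists (fam k (S n) z). apply fam_der. Qed.

Lemma SS_sin x : sin x = x * fam 0 0 (x * x).
Proof.
  unfold sin. destruct (exist_sin (Rsqr x)) as [l Hl]. f_equal.
  simpl. symmetry. apply is_pseries_unique.
  unfold is_pseries. apply is_series_Reals. unfold sin_in in Hl. unfold Rsqr in Hl.
  intros e He; destruct (Hl e He) as [N HN]; exists N; intros n Hn. idtac.
  match goal with |- R_dist ?S l < e => replace S with (sum_f_R0 (fun i : nat => sin_n i * (x * x) ^ i) n) end. apply HN; auto.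
  apply sum_eq. intros i _. unfold scal; simpl; unfold mult; simpl. unfold cSS. rewrite Rmult_comm. f_equal.
Qed.

Lemma ex_SS z : ex_pseries cSS z.
Proof. apply CV_radius_inside. rewrite CV_SS. simpl; auto. Qed.

Lemma SS_TT z : fam 0 0 z = 1 - z * fam 1 0 z.
Proof.
  simpl. rewrite (PSeries_decr_1 cSS z (ex_SS z)).
  change cTT with (PS_opp (PS_decr_1 cSS)). rewrite PSeries_opp.
  replace (cSS 0%nat) with 1. ring. unfold cSS, sin_n. simpl. field.
Qed.

Lemma sin_TT x : x - sin x = x * x * x * fam 1 0 (x * x).
Proof. rewrite SS_sin. replace (fam 0 0 (x*x)) with (1 - (x*x) * fam 1 0 (x*x)) by (symmetry; apply SS_TT). ring. Qed.

Ltac famv := unfold fam; rewrite PSeries_0; simpl itd; unfold PS_derive, cSS, cTT, sin_n;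
  rewrite ?INR_IZR_INZ; simpl Z.of_nat; simpl pow; field.

Lemma fam000 : fam 0 0 0 = 1. Proof. famv. Qed.
Lemma fam010 : fam 0 1 0 = -1/6. Proof. famv. Qed.
Lemma fam020 : fam 0 2 0 = 1/60. Proof. famv. Qed.
Lemma fam100 : fam 1 0 0 = 1/6. Proof. famv. Qed.
Lemma fam110 : fam 1 1 0 = -1/120. Proof. famv. Qed.
Lemma fam120 : fam 1 2 0 = 1/2520. Proof. famv. Qed.

Definition Fy (a eps x : R) : R := eps * x ^ 3 / 3 + (a - eps) * x ^ 2 / 2 + x / 2.

Lemma isRInt_y a eps u v : is_RInt (ycurve a eps) u v (Fy a eps v - Fy a eps u).
Proof.
  apply (is_RInt_derive (Fy a eps) (ycurve a eps)).
  - intros x _. unfold Fy, ycurve. auto_derive; auto. field.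
  - intros x _. apply continuity_pt_filterlim. apply ycurve_cont.
Qed.

Lemma yint_eq a eps u v : yint a eps u v = Fy a eps v - Fy a eps u.
Proof.
  unfold yint, integ. destruct (Rle_dec u v).
  - rewrite <- RInt_Reals. apply is_RInt_unique. apply isRInt_y.
  - rewrite <- RInt_Reals. rewrite (is_RInt_unique _ _ _ _ (isRInt_y a eps v u)). ring.
Qed.


Inductive E : Type :=
| Zero | One | Cst (c : Q) | Var (j : nat) | Add (a b : E) | Mul (a b : E)
| Neg (a : E) | Inv (a : E) | Sqrt (a : E) | Fn (k n : nat) (a : E).

Definition proj (j : nat) (x : pt5) : R :=
  match j with 0%nat => cq x | 1%nat => cp x | 2%nat => cth x | 3%nat => ca x | _ => ceps x end.
Definition idx (j : nat) : nat :=
  match j with 0%nat => 0 | 1%nat => 1 | 2%nat => 2 | 3%nat => 3 | _ => 4 end.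

Fixpoint eval (e : E) (x : pt5) : R :=
  match e with
  | Zero => 0 | One => 1 | Cst c => Q2R c | Var j => proj j x
  | Add a b => eval a x + eval b x | Mul a b => eval a x * eval b x
  | Neg a => - eval a x | Inv a => / eval a x | Sqrt a => sqrt (eval a x)
  | Fn k n a => fam k n (eval a x)
  end.

Fixpoint dom (e : E) (x : pt5) : Prop :=
  match e with
  | Add a b | Mul a b => dom a x /\ dom b x
  | Neg a | Fn _ _ a => dom a x
  | Inv a => dom a x /\ eval a x <> 0
  | Sqrt a => dom a x /\ 0 < eval a x
  | _ => True
  end.

Definition add' (a b : E) : E :=
  match a with Zero => b | _ => match b with Zero => a | _ => Add a b end end.
Definition mul' (a b : E) : E :=
  match a with Zero => Zero | One => b | _ => match b with Zero => Zero | One => a | _ => Mul a b end end.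
Definition neg' (a : E) : E := match a with Zero => Zero | _ => Neg a end.

Fixpoint deriv (i : nat) (e : E) : E :=
  match e with
  | Zero | One | Cst _ => Zero
  | Var j => if Nat.eqb (idx i) (idx j) then One else Zero
  | Add a b => add' (deriv i a) (deriv i b)
  | Mul a b => add' (mul' (deriv i a) b) (mul' a (deriv i b))
  | Neg a => neg' (deriv i a)
  | Inv a => neg' (mul' (deriv i a) (Mul (Inv a) (Inv a)))
  | Sqrt a => mul' (deriv i a) (Inv (Mul (Add One One) (Sqrt a)))
  | Fn k n a => mul' (deriv i a) (Fn k (S n) a)
  end.

Lemma eval_add' a b x : eval (add' a b) x = eval a x + eval b x.
Proof. destruct a; destruct b; simpl; ring. Qed.
Lemma eval_mul' a b x : eval (mul' a b) x = eval a x * eval b x.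
Proof. destruct a; destruct b; simpl; ring. Qed.
Lemma eval_neg' a x : eval (neg' a) x = - eval a x.
Proof. destruct a; simpl; ring. Qed.
Lemma dom_add' a b x : dom a x -> dom b x -> dom (add' a b) x.
Proof. destruct a; destruct b; simpl; tauto. Qed.
Lemma dom_mul' a b x : dom a x -> dom b x -> dom (mul' a b) x.
Proof. destruct a; destruct b; simpl; tauto. Qed.
Lemma dom_neg' a x : dom a x -> dom (neg' a) x.
Proof. destruct a; simpl; tauto. Qed.

Lemma dom_deriv i e x : dom e x -> dom (deriv i e) x.
Proof.
  induction e; simpl; intros; try tauto.
  - destruct (Nat.eqb _ _); simpl; auto.
  - apply dom_add'; tauto.
  - apply dom_add'; apply dom_mul'; tauto.
  - apply dom_neg'; tauto.
  - apply dom_neg'; apply dom_mul'; simpl; tauto.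
  - apply dom_mul'; simpl. tauto. split. tauto.
    apply Rgt_not_eq. apply Rmult_lt_0_compat. lra. apply sqrt_lt_R0; tauto.
  - apply dom_mul'; simpl; tauto.
Qed.

Definition line (x h : pt5) (t : R) : pt5 :=
  mk5 (cq x + t * cq h) (cp x + t * cp h) (cth x + t * cth h) (ca x + t * ca h) (ceps x + t * ceps h).

Definition dsum (e : E) (y h : pt5) : R :=
  proj 0 h * eval (deriv 0 e) y + proj 1 h * eval (deriv 1 e) y + proj 2 h * eval (deriv 2 e) y
  + proj 3 h * eval (deriv 3 e) y + proj 4 h * eval (deriv 4 e) y.

Lemma dpl_ext (f g : R -> R) t l l' : (forall s, f s = g s) -> l = l' ->
  derivable_pt_lim f t l -> derivable_pt_lim g t l'.
Proof.
  intros H <- Hd e He. destruct (Hd e He) as [d Hd']. exists d. intros h Hh Hh'.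
  rewrite <- !H. apply Hd'; auto.
Qed.

Lemma proj_line j x h s : proj j (line x h s) = proj j x + s * proj j h.
Proof. destruct j as [|[|[|[|j]]]]; reflexivity. Qed.

Lemma line_der e x h t : dom e (line x h t) ->
  derivable_pt_lim (fun s => eval e (line x h s)) t (dsum e (line x h t) h).
Proof.
  induction e; simpl; intro Hd.
  - eapply dpl_ext; [| | apply (derivable_pt_lim_const 0 t)]; intros; [reflexivity|].
    unfold dsum; simpl; ring.
  - eapply dpl_ext; [| | apply (derivable_pt_lim_const 1 t)]; intros; [reflexivity|].
    unfold dsum; simpl; ring.
  - eapply dpl_ext; [| | apply (derivable_pt_lim_const (Q2R c) t)]; intros; [reflexivity|].
    unfold dsum; simpl; ring.
  - eapply dpl_ext with (f := fun s => proj j x + s * proj j h) (l := proj j h).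
    + intro s; rewrite proj_line; reflexivity.
    + unfold dsum. destruct j as [|[|[|[|j]]]]; simpl; ring.
    + apply is_derive_Reals. auto_derive; auto. ring.
  - eapply dpl_ext; [| | apply derivable_pt_lim_plus; [apply IHe1|apply IHe2]; tauto].
    + intro; reflexivity.
    + unfold dsum; simpl deriv; rewrite !eval_add'; ring.
  - eapply dpl_ext; [| | apply derivable_pt_lim_mult; [apply IHe1|apply IHe2]; tauto].
    + intro; reflexivity.
    + unfold dsum; simpl deriv; rewrite !eval_add', !eval_mul'; ring.
  - eapply dpl_ext; [| | apply derivable_pt_lim_opp; apply IHe; tauto].
    + intro; reflexivity.
    + unfold dsum; simpl deriv; rewrite !eval_neg'; ring.
  - eapply dpl_ext with (f := fun s => / eval e (line x h s)).
    + intro; reflexivity.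
    2: { apply is_derive_Reals. apply is_derive_inv. apply is_derive_Reals, IHe; tauto. tauto. }
    unfold dsum; simpl deriv; rewrite !eval_neg', !eval_mul'. simpl eval. field. tauto.
  - eapply dpl_ext with (f := comp sqrt (fun s => eval e (line x h s))).
    + intro; reflexivity.
    2: { apply derivable_pt_lim_comp. apply IHe; tauto. apply derivable_pt_lim_sqrt. tauto. }
    unfold dsum; simpl deriv; rewrite !eval_mul'. simpl eval. field.
    apply Rgt_not_eq, sqrt_lt_R0; tauto.
  - eapply dpl_ext with (f := comp (fam k n) (fun s => eval e (line x h s))).
    + intro; reflexivity.
    2: { apply derivable_pt_lim_comp. apply IHe; tauto. apply fam_der. }
    unfold dsum; simpl deriv; rewrite !eval_mul'. simpl eval. ring.
Qed.


Lemma cpt_unfold (f : R -> R) z : continuity_pt f z ->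
  forall e, 0 < e -> exists d, 0 < d /\ forall w, Rabs (w - z) < d -> Rabs (f w - f z) < e.
Proof.
  intros H e He. destruct (H e He) as [d [Hd H']]. exists d. split; auto.
  intros w Hw. destruct (Req_dec w z) as [->|Hne].
  - rewrite Rminus_diag, Rabs_R0; auto.
  - apply (H' w). split. split. exact I. intro; apply Hne; auto. exact Hw.
Qed.

Lemma proj_dist j x y : Rabs (proj j y - proj j x) <= dist5 x y.
Proof.
  rewrite Rabs_minus_sym. unfold dist5.
  destruct j as [|[|[|[|j]]]]; simpl.
  - apply Rmax_l.
  - eapply Rle_trans; [|apply Rmax_r]. apply Rmax_l.
  - eapply Rle_trans; [|apply Rmax_r]. eapply Rle_trans; [|apply Rmax_r]. apply Rmax_l.
  - eapply Rle_trans; [|apply Rmax_r]. eapply Rle_trans; [|apply Rmax_r].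
    eapply Rle_trans; [|apply Rmax_r]. apply Rmax_l.
  - eapply Rle_trans; [|apply Rmax_r]. eapply Rle_trans; [|apply Rmax_r].
    eapply Rle_trans; [|apply Rmax_r]. apply Rmax_r.
Qed.

Lemma cont_const c x : cont5_at (fun _ => c) x.
Proof. intros e He; exists 1; split; [lra|]; intros; rewrite Rminus_diag, Rabs_R0; auto. Qed.

Lemma cont_proj j x : cont5_at (proj j) x.
Proof. intros e He; exists e; split; auto; intros y Hy. eapply Rle_lt_trans; [apply proj_dist|]; auto. Qed.

Lemma cont_plus f g x : cont5_at f x -> cont5_at g x -> cont5_at (fun y => f y + g y) x.
Proof.
  intros Hf Hg e He. destruct (Hf (e/2)) as [d1 [H1 H1']]; [lra|].
  destruct (Hg (e/2)) as [d2 [H2 H2']]; [lra|].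
  exists (Rmin d1 d2); split; [apply Rmin_pos; auto|]. intros y Hy.
  assert (A1 := H1' y ltac:(eapply Rlt_le_trans; [exact Hy|apply Rmin_l])).
  assert (A2 := H2' y ltac:(eapply Rlt_le_trans; [exact Hy|apply Rmin_r])).
  replace (f y + g y - (f x + g x)) with ((f y - f x) + (g y - g x)) by ring.
  eapply Rle_lt_trans; [apply Rabs_triang|]. lra.
Qed.

Lemma cont_comp (phi : R -> R) f x : continuity_pt phi (f x) -> cont5_at f x ->
  cont5_at (fun y => phi (f y)) x.
Proof.
  intros Hp Hf e He. destruct (cpt_unfold _ _ Hp e He) as [d1 [H1 H1']].
  destruct (Hf d1 H1) as [d [Hd Hd']]. exists d; split; auto.
Qed.

Lemma cont_mult f g x : cont5_at f x -> cont5_at g x -> cont5_at (fun y => f y * g y) x.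
Proof.
  intros Hf Hg.
  assert (Hsq : forall z, continuity_pt (fun w => w * w) z).
  { intro z. apply (continuity_pt_mult (fun w => w) (fun w => w)); apply derivable_continuous_pt, derivable_pt_id. }
  assert (H : cont5_at (fun y => / 4 * ((f y + g y) * (f y + g y)) + / 4 * (- ((f y + - g y) * (f y + - g y)))) x).
  { apply cont_plus.
    - apply (cont_comp (fun w => /4 * (w * w)) (fun y => f y + g y)).
      apply continuity_pt_mult. apply continuity_pt_const; intros ? ?; auto. apply Hsq.
      apply cont_plus; auto.
    - apply (cont_comp (fun w => /4 * - (w * w)) (fun y => f y + - g y)).
      apply continuity_pt_mult. apply continuity_pt_const; intros ? ?; auto.
      apply continuity_pt_opp, Hsq.
      apply cont_plus; auto. apply (cont_comp Ropp g); auto. apply continuity_pt_opp, derivable_continuous_pt, derivable_pt_id. }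
  intros e He. destruct (H e He) as [d [Hd Hd']]. exists d; split; auto. intros y Hy.
  specialize (Hd' y Hy). cbv beta in Hd'. replace (f y * g y - f x * g x) with (/ 4 * ((f y + g y) * (f y + g y)) + / 4 * - ((f y + - g y) * (f y + - g y)) - (/ 4 * ((f x + g x) * (f x + g x)) + / 4 * - ((f x + - g x) * (f x + - g x)))) by field. exact Hd'.
Qed.

Lemma eval_cont e x : dom e x -> cont5_at (eval e) x.
Proof.
  induction e; simpl; intro Hd.
  - apply cont_const. - apply cont_const. - apply cont_const. - apply cont_proj.
  - apply cont_plus; [apply IHe1|apply IHe2]; tauto.
  - apply cont_mult; [apply IHe1|apply IHe2]; tauto.
  - apply (cont_comp Ropp); [apply continuity_pt_opp, derivable_continuous_pt, derivable_pt_id|apply IHe; tauto].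
  - apply (cont_comp Rinv); [|apply IHe; tauto].
    apply (continuity_pt_inv (fun w => w)). apply derivable_continuous_pt, derivable_pt_id. tauto.
  - apply (cont_comp sqrt); [|apply IHe; tauto]. apply sqrt_continuity_pt. tauto.
  - apply (cont_comp (fam k n)); [apply fam_cont|apply IHe; tauto].
Qed.

Definition nbhd (P : pt5 -> Prop) (x : pt5) := exists d, 0 < d /\ forall y, dist5 x y < d -> P y.

Lemma nbhd_and P Q x : nbhd P x -> nbhd Q x -> nbhd (fun y => P y /\ Q y) x.
Proof.
  intros [d1 [H1 H1']] [d2 [H2 H2']]. exists (Rmin d1 d2); split; [apply Rmin_pos; auto|].
  intros y Hy; split; [apply H1'|apply H2']; eapply Rlt_le_trans; eauto; [apply Rmin_l|apply Rmin_r].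
Qed.

Lemma nbhd_cont f x : cont5_at f x -> f x <> 0 -> nbhd (fun y => f y <> 0 /\ (0 < f x -> 0 < f y)) x.
Proof.
  intros Hc Hn. destruct (Hc (Rabs (f x))) as [d [Hd Hd']]. apply Rabs_pos_lt; auto.
  exists d; split; auto. intros y Hy. specialize (Hd' y Hy).
  assert (Hc' : f x < 0 \/ 0 < f x) by (destruct (Rtotal_order (f x) 0) as [?|[?|?]]; auto; contradiction).
  destruct Hc'; [rewrite (Rabs_left (f x)) in Hd' by lra|rewrite (Rabs_right (f x)) in Hd' by lra];
  apply Rabs_def2 in Hd'; destruct Hd'; split; intros; lra.
Qed.

Lemma dom_open e x : dom e x -> nbhd (dom e) x.
Proof.
  induction e; simpl; intro Hd; try (exists 1; split; [lra|auto]; fail).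
  - apply nbhd_and; tauto.
  - apply nbhd_and; tauto.
  - auto.
  - destruct (nbhd_and _ _ x (IHe (proj1 Hd)) (nbhd_cont _ _ (eval_cont e x (proj1 Hd)) (proj2 Hd)))
      as [d [H1 H2]]. exists d; split; auto. intros y Hy; split; apply H2; auto.
  - assert (Hn : eval e x <> 0) by (apply Rgt_not_eq; tauto).
    destruct (nbhd_and _ _ x (IHe (proj1 Hd)) (nbhd_cont _ _ (eval_cont e x (proj1 Hd)) Hn))
      as [d [H1 H2]]. exists d; split; auto. intros y Hy; split; apply H2; tauto.
  - auto.
Qed.


Definition unitv (i : nat) : pt5 := shift i 1 (mk5 0 0 0 0 0).

Lemma shift_line i h x : shift i h x = line x (unitv i) h.
Proof. destruct x; destruct i as [|[|[|[|i]]]]; unfold line, shift, unitv; simpl; f_equal; ring. Qed.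

Lemma line0 x h : line x h 0 = x.
Proof. destruct x; unfold line; simpl; f_equal; ring. Qed.

Lemma dsum_unit e x i : (i < 5)%nat -> dsum e x (unitv i) = eval (deriv i e) x.
Proof.
  intro Hi. destruct i as [|[|[|[|[|i]]]]]; try lia; unfold dsum; simpl; ring.
Qed.

Lemma partial_eval i e x : (i < 5)%nat -> dom e x -> partial i (eval e) x (eval (deriv i e) x).
Proof.
  intros Hi Hd. unfold partial.
  eapply dpl_ext with (f := fun s => eval e (line x (unitv i) s)) (l := dsum e (line x (unitv i) 0) (unitv i)).
  - intro s. rewrite shift_line. reflexivity.
  - rewrite <- (dsum_unit e x i Hi). rewrite line0. reflexivity.
  - apply line_der. rewrite line0. auto.
Qed.

Lemma eval_Ck k : forall e U, (forall x, U x -> dom e x) -> Ck k U (eval e).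
Proof.
  induction k; intros e U HU; simpl.
  - intros x Hx; apply eval_cont; auto.
  - split. intros x Hx; apply eval_cont; auto.
    exists (fun i => eval (deriv i e)). split.
    + intros i x Hi Hx. apply partial_eval; auto.
    + intros i Hi. apply IHk. intros x Hx. apply dom_deriv; auto.
Qed.

Lemma dist5_lt x y d : Rabs (cq x - cq y) < d -> Rabs (cp x - cp y) < d -> Rabs (cth x - cth y) < d ->
  Rabs (ca x - ca y) < d -> Rabs (ceps x - ceps y) < d -> dist5 x y < d.
Proof. intros; unfold dist5; repeat apply Rmax_lub_lt; auto. Qed.

Lemma dist_shift i h x : (i < 5)%nat -> dist5 x (shift i h x) <= Rabs h.
Proof.
  intro Hi. unfold dist5. destruct i as [|[|[|[|[|i]]]]]; try lia; simpl;
  repeat apply Rmax_lub; try (rewrite Rminus_diag, Rabs_R0; apply Rabs_pos);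
  (replace (_ - _) with (- h) by ring; rewrite Rabs_Ropp; lra).
Qed.

Lemma dpl_local (f g : R -> R) t l r : 0 < r -> (forall s, Rabs (s - t) < r -> f s = g s) ->
  derivable_pt_lim f t l -> derivable_pt_lim g t l.
Proof.
  intros Hr H Hd e He. destruct (Hd e He) as [d Hd']. 
  assert (Hm : 0 < Rmin d r) by (apply Rmin_pos; [apply cond_pos|auto]).
  exists (mkposreal _ Hm). intros h Hh Hh'. simpl in Hh'.
  rewrite <- !H. apply Hd'; auto. eapply Rlt_le_trans; [exact Hh'|apply Rmin_l].
  rewrite Rminus_diag, Rabs_R0; auto.
  replace (t + h - t) with h by ring. eapply Rlt_le_trans; [exact Hh'|apply Rmin_r].
Qed.

Lemma Ck_ext k U f g : open5 U -> (forall x, U x -> f x = g x) -> Ck k U f -> Ck k U g.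
Proof.
  intros HU Heq.
  assert (Hc : (forall x, U x -> cont5_at f x) -> forall x, U x -> cont5_at g x).
  { intros Hf x Hx e He. destruct (HU x Hx) as [d1 [H1 H1']]. destruct (Hf x Hx e He) as [d2 [H2 H2']].
    exists (Rmin d1 d2). split. apply Rmin_pos; auto. intros y Hy.
    rewrite <- !Heq; auto. apply H2'. eapply Rlt_le_trans; [exact Hy|apply Rmin_r].
    apply H1'. eapply Rlt_le_trans; [exact Hy|apply Rmin_l]. }
  destruct k; simpl.
  - auto.
  - intros [Hf [D [HD HD']]]. split; auto. exists D; split; auto.
    intros i x Hi Hx. destruct (HU x Hx) as [d1 [H1 H1']].
    unfold partial. apply dpl_local with (f := fun h => f (shift i h x)) (r := d1); auto.
    + intros s Hs. apply Heq. apply H1'. eapply Rle_lt_trans; [apply dist_shift; auto|].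
      rewrite Rminus_0_r in Hs; auto.
    + apply HD; auto.
Qed.


Definition sub (a b : E) := Add a (Neg b).
Definition vq := Var 0. Definition vp := Var 1. Definition vth := Var 2.
Definition va := Var 3. Definition ve := Var 4.
Definition ey := Add (Add (Mul ve (Mul vp vp)) (Mul (sub va ve) vp)) (Cst (1#2)).
Definition ec2 := Add (Mul (sub vq vp) (sub vq vp)) (Mul ey ey).
Definition eS := Fn 0 0 (Mul (Mul vth vth) (Cst (1#4))).
Definition eT := Fn 1 0 (Mul vth vth).
Definition eL := Mul (Sqrt ec2) (Inv eS).
Definition eK := Mul (Mul vth eT) (Inv (Mul (Mul (Cst 2) eS) eS)).
Definition eFp := Add (Add (Mul (Mul ve (Mul vp (Mul vp vp))) (Cst (1#3)))
                            (Mul (Mul (sub va ve) (Mul vp vp)) (Cst (1#2)))) (Mul vp (Cst (1#2))).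
Definition eA1 := Add (Add eFp (Mul (Mul (Cst (1#2)) ey) (sub vq vp))) (Mul ec2 eK).
Definition eAt := Add (Add (Mul ve (Cst (1#3))) (Mul (sub va ve) (Cst (1#2)))) (Cst (1#2)).
Definition eA2 := sub eAt eA1.
Definition eRC := Mul eL (Inv (Mul eA1 eA2)).

Lemma Q2R_half : Q2R (1#2) = / 2. Proof. unfold Q2R; simpl; field. Qed.
Lemma Q2R_quarter : Q2R (1#4) = / 4. Proof. unfold Q2R; simpl; field. Qed.
Lemma Q2R_third : Q2R (1#3) = / 3. Proof. unfold Q2R; simpl; field. Qed.
Lemma Q2R_two : Q2R 2 = 2. Proof. unfold Q2R; simpl; field. Qed.

Ltac evs := cbn [eval proj cq cp cth ca ceps eRC eL eA1 eA2 eAt eFp eK ec2 ey eS eT sub vq vp vth va ve];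
  rewrite ?Q2R_half, ?Q2R_quarter, ?Q2R_third, ?Q2R_two.

Lemma c2_eq q p a ep : chord2 a ep p q = eval ec2 (mk5 q p 0 a ep).
Proof. unfold chord2, ycurve. evs. ring. Qed.

Lemma arclen_eq q p th a ep : fam 0 0 (th * th * / 4) <> 0 ->
  arclen p q th a ep = eval eL (mk5 q p th a ep).
Proof.
  intro HS. unfold arclen, Rad. rewrite (c2_eq q p a ep). unfold eL. cbn [eval].
  replace (eval ec2 (mk5 q p th a ep)) with (eval ec2 (mk5 q p 0 a ep)) by reflexivity.
  set (c2 := eval ec2 (mk5 q p 0 a ep)). unfold eS. evs.
  destruct (Req_EM_T th 0) as [->|Hth].
  - replace (0 * 0 * / 4) with 0 by ring. rewrite fam000. field.
  - assert (Hs : sin (th / 2) = th / 2 * fam 0 0 (th * th * / 4)).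
    { rewrite SS_sin. f_equal. f_equal. field. }
    rewrite Hs. field. auto.
Qed.

Lemma A1_eq q p th a ep : fam 0 0 (th * th * / 4) <> 0 ->
  A1 p q th a ep = eval eA1 (mk5 q p th a ep).
Proof.
  intro HS. unfold A1, Rad. rewrite yint_eq. rewrite (c2_eq q p a ep). unfold eA1.
  cbn [eval]. replace (eval ec2 (mk5 q p th a ep)) with (eval ec2 (mk5 q p 0 a ep)) by reflexivity.
  set (c2 := eval ec2 (mk5 q p 0 a ep)).
  assert (Hc2 : 0 <= c2) by (unfold c2; evs; apply Rplus_le_le_0_compat; apply Rle_0_sqr).
  unfold eK, eFp, ey, eS, eT. evs. unfold Fy, ycurve.
  destruct (Req_EM_T th 0) as [->|Hth].
  - rewrite !Rmult_0_l. field.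
  - set (S0 := fam 0 0 (th * th * / 4)) in *. set (T0 := fam 1 0 (th * th)).
    assert (Hs : sin (th / 2) = th / 2 * S0).
    { rewrite SS_sin. unfold S0. f_equal. f_equal. field. }
    assert (Hsc : 2 * sin (th / 2) * cos (th / 2) = th - th * th * th * T0).
    { rewrite <- sin_2a. replace (2 * (th / 2)) with th by field. rewrite <- sin_TT. ring. }
    assert (Hsn : sin (th / 2) <> 0).
    { rewrite Hs. apply Rmult_integral_contrapositive. split; auto. lra. }
    assert (Hc : cos (th / 2) = (th - th * th * th * T0) / (2 * sin (th / 2))).
    { rewrite <- Hsc. field. auto. }
    assert (Hsq : sqrt c2 ^ 2 = c2) by (simpl; rewrite Rmult_1_r; apply sqrt_sqrt; auto).
    rewrite Hc.
    replace ((sqrt c2 / (2 * sin (th / 2))) ^ 2) with (c2 / (4 * sin (th / 2) ^ 2))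
      by (replace (c2 / (4 * sin (th / 2) ^ 2)) with (sqrt c2 ^ 2 / (4 * sin (th / 2) ^ 2)) by (rewrite Hsq; reflexivity); field; auto).
    rewrite Hs. field. split; auto.
Qed.

Lemma Atot_eq q p th a ep : Atot a ep = eval eAt (mk5 q p th a ep).
Proof. unfold Atot. rewrite yint_eq. unfold Fy. evs. field. Qed.

Lemma RC_eq x : dom eRC x -> RCpt x = eval eRC x.
Proof.
  intro Hd. destruct x as [q p th a ep].
  assert (HS : fam 0 0 (th * th * / 4) <> 0).
  { unfold eRC, eL in Hd. cbn [dom] in Hd. revert Hd. unfold eS. evs. tauto. }
  unfold RCpt, RC, A2. cbn [cq cp cth ca ceps].
  rewrite arclen_eq, A1_eq, (Atot_eq q p th a ep) by auto. reflexivity.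
Qed.


Definition famQ (k n : nat) : option Q :=
  match k, n with
  | 0%nat, 0%nat => Some 1%Q | 0%nat, 1%nat => Some (-1#6) | 0%nat, 2%nat => Some (1#60)
  | 1%nat, 0%nat => Some (1#6) | 1%nat, 1%nat => Some (-1#120) | 1%nat, 2%nat => Some (1#2520)
  | _, _ => None end.

Definition varQ (j : nat) : Q := match j with 0%nat | 1%nat => 1#2 | _ => 0%Q end.

Fixpoint evQ (e : E) : option Q :=
  match e with
  | Zero => Some 0%Q | One => Some 1%Q | Cst c => Some c | Var j => Some (varQ j)
  | Add a b => match evQ a, evQ b with Some u, Some v => Some (Qred (u + v)%Q) | _, _ => None end
  | Mul a b => match evQ a, evQ b with Some u, Some v => Some (Qred (u * v)%Q) | _, _ => None end
  | Neg a => match evQ a with Some u => Some (Qred (- u)%Q) | None => None end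
  | Inv a => match evQ a with Some u => if Qeq_bool u 0%Q then None else Some (Qred (/ u)%Q) | None => None end
  | Sqrt a => match evQ a with Some u => if Qeq_bool u (1#4) then Some (1#2) else None | None => None end
  | Fn k n a => match evQ a with Some u => if Qeq_bool u 0%Q then famQ k n else None | None => None end
  end.

Lemma Q2R_red q : Q2R (Qred q) = Q2R q.
Proof. apply Qeq_eqR, Qred_correct. Qed.

Lemma some_inj {A : Type} (a b : A) : Some a = Some b -> b = a.
Proof. congruence. Qed.

Lemma famQ_ok k n r : famQ k n = Some r -> fam k n 0 = Q2R r.
Proof.
  destruct k as [|[|k]]; destruct n as [|[|[|n]]]; cbn [famQ]; intro H; try discriminate;
  apply some_inj in H; subst r;
  first [rewrite fam000|rewrite fam010|rewrite fam020|rewrite fam100|rewrite fam110|rewrite fam120];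
  unfold Q2R; simpl; field.
Qed.

Lemma evQ_ok e r : evQ e = Some r -> dom e x0 /\ eval e x0 = Q2R r.
Proof.
  revert r; induction e; intros r H; cbn [evQ] in H; cbn [dom eval].
  - apply some_inj in H; subst r; split; auto. unfold Q2R; simpl; field.
  - apply some_inj in H; subst r; split; auto. unfold Q2R; simpl; field.
  - apply some_inj in H; subst r; split; auto.
  - apply some_inj in H; subst r; split; auto. destruct j as [|[|[|[|j]]]]; unfold x0, varQ; simpl; unfold Q2R; simpl; field.
  - destruct (evQ e1) as [u|]; [|discriminate]; destruct (evQ e2) as [v|]; [|discriminate].
    apply some_inj in H; subst r. destruct (IHe1 u eq_refl); destruct (IHe2 v eq_refl).
    split; auto. rewrite Q2R_red, Q2R_plus; congruence.
  - destruct (evQ e1) as [u|]; [|discriminate]; destruct (evQ e2) as [v|]; [|discriminate].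
    apply some_inj in H; subst r. destruct (IHe1 u eq_refl); destruct (IHe2 v eq_refl).
    split; auto. rewrite Q2R_red, Q2R_mult; congruence.
  - destruct (evQ e) as [u|]; [|discriminate]. apply some_inj in H; subst r. destruct (IHe u eq_refl).
    split; auto. rewrite Q2R_red, Q2R_opp; congruence.
  - destruct (evQ e) as [u|]; [|discriminate]. destruct (Qeq_bool u 0%Q) eqn:Hq; [discriminate|].
    apply some_inj in H; subst r. destruct (IHe u eq_refl) as [H1 H2].
    assert (Hn : ~ (u == 0)%Q) by (intro Hc; apply Qeq_bool_iff in Hc; congruence).
    split. split; auto. rewrite H2. intro Hc. apply Hn. apply eqR_Qeq. rewrite Hc. unfold Q2R; simpl; ring.
    rewrite Q2R_red, Q2R_inv; congruence.
  - destruct (evQ e) as [u|]; [|discriminate]. destruct (Qeq_bool u (1#4)) eqn:Hq; [|discriminate].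
    apply some_inj in H; subst r. destruct (IHe u eq_refl) as [H1 H2].
    apply Qeq_bool_iff in Hq. apply Qeq_eqR in Hq. rewrite H2, Hq, Q2R_quarter, Q2R_half.
    split. split; auto; lra.
    replace (/4) with (/2 * /2) by field. apply sqrt_square. lra.
  - destruct (evQ e) as [u|]; [|discriminate]. destruct (Qeq_bool u 0%Q) eqn:Hq; [|discriminate].
    destruct (IHe u eq_refl) as [H1 H2].
    apply Qeq_bool_iff in Hq. apply Qeq_eqR in Hq. split; auto. rewrite H2, Hq.
    replace (Q2R 0%Q) with 0 by (unfold Q2R; simpl; ring). apply famQ_ok; auto.
Qed.



Definition dsum2 (e : E) (y h : pt5) : R :=
  proj 0 h * dsum (deriv 0 e) y h + proj 1 h * dsum (deriv 1 e) y h + proj 2 h * dsum (deriv 2 e) y h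
  + proj 3 h * dsum (deriv 3 e) y h + proj 4 h * dsum (deriv 4 e) y h.

Lemma dsum_der e x h t : dom e (line x h t) ->
  derivable_pt_lim (fun s => dsum e (line x h s) h) t (dsum2 e (line x h t) h).
Proof.
  intro Hd. unfold dsum, dsum2.
  assert (Hj : forall j, derivable_pt_lim (fun s => proj j h * eval (deriv j e) (line x h s)) t
                                         (proj j h * dsum (deriv j e) (line x h t) h)).
  { intro j. eapply dpl_ext; [| |apply (derivable_pt_lim_scal (fun s => eval (deriv j e) (line x h s)) (proj j h)), line_der, dom_deriv, Hd];
    intros; reflexivity. }
  repeat (apply derivable_pt_lim_plus); auto.
Qed.

Lemma mvt1 e x h : (forall t, 0 <= t <= 1 -> dom e (line x h t)) ->
  exists c, 0 < c < 1 /\ eval e (line x h 1) - eval e (line x h 0) = dsum e (line x h c) h.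
Proof.
  intro Hd. destruct (MVT_cor2 (fun s => eval e (line x h s)) (fun s => dsum e (line x h s) h) 0 1)
    as [c [Hc Hc']]; [lra| |].
  - intros c Hc. apply line_der, Hd; auto.
  - exists c; split; auto. rewrite Hc. ring.
Qed.

Lemma mvt2 e x h : (forall t, 0 <= t <= 1 -> dom e (line x h t)) ->
  exists c c', 0 < c < 1 /\ 0 < c' < 1 /\
    eval e (line x h 1) - eval e (line x h 0) - dsum e (line x h 0) h = c * dsum2 e (line x h c') h.
Proof.
  intro Hd. destruct (mvt1 e x h Hd) as [c [Hc Hc']].
  destruct (MVT_cor2 (fun s => dsum e (line x h s) h) (fun s => dsum2 e (line x h s) h) 0 c)
    as [c' [Hc1 Hc2]]; [lra| |].
  - intros s Hs. apply dsum_der, Hd; lra.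
  - exists c, c'. split; auto. split; [lra|]. rewrite Hc'. rewrite Rminus_0_r in Hc1. lra.
Qed.

Lemma dist5_sym x y : dist5 x y = dist5 y x.
Proof. unfold dist5. rewrite (Rabs_minus_sym (cq x)), (Rabs_minus_sym (cp x)), (Rabs_minus_sym (cth x)),
  (Rabs_minus_sym (ca x)), (Rabs_minus_sym (ceps x)). reflexivity. Qed.

Lemma dist5_le x y d : Rabs (cq x - cq y) <= d -> Rabs (cp x - cp y) <= d -> Rabs (cth x - cth y) <= d ->
  Rabs (ca x - ca y) <= d -> Rabs (ceps x - ceps y) <= d -> dist5 x y <= d.
Proof. intros; unfold dist5; repeat apply Rmax_lub; auto. Qed.

Lemma coord_le j x y : Rabs (proj j x - proj j y) <= dist5 x y.
Proof. rewrite Rabs_minus_sym. apply proj_dist. Qed.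

Lemma coord_tri (u v w d1 d2 : R) : Rabs (u - v) <= d1 -> Rabs (v - w) <= d2 -> Rabs (u - w) <= d1 + d2.
Proof. intros. replace (u - w) with ((u - v) + (v - w)) by ring. eapply Rle_trans; [apply Rabs_triang|lra]. Qed.

Lemma dist5_triang x y z : dist5 x z <= dist5 x y + dist5 y z.
Proof.
  apply dist5_le.
  - apply coord_tri with (cq y); [apply (coord_le 0)|apply (coord_le 0)].
  - apply coord_tri with (cp y); [apply (coord_le 1)|apply (coord_le 1)].
  - apply coord_tri with (cth y); [apply (coord_le 2)|apply (coord_le 2)].
  - apply coord_tri with (ca y); [apply (coord_le 3)|apply (coord_le 3)].
  - apply coord_tri with (ceps y); [apply (coord_le 4)|apply (coord_le 4)].
Qed.

Lemma conv_coord u v z r t : Rabs (u - z) <= r -> Rabs (v - z) <= r -> 0 <= t <= 1 ->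
  Rabs (u + t * (v - u) - z) <= r.
Proof.
  intros Hu Hv Ht. replace (u + t * (v - u) - z) with ((1 - t) * (u - z) + t * (v - z)) by ring.
  eapply Rle_trans; [apply Rabs_triang|]. rewrite !Rabs_mult, (Rabs_right (1 - t)), (Rabs_right t) by lra.
  apply Rle_trans with ((1 - t) * r + t * r); [|lra].
  apply Rplus_le_compat; apply Rmult_le_compat_l; lra.
Qed.

Definition diff (x y : pt5) : pt5 :=
  mk5 (cq x - cq y) (cp x - cp y) (cth x - cth y) (ca x - ca y) (ceps x - ceps y).

Lemma line_diff1 x y : line y (diff x y) 1 = x.
Proof. destruct x, y; unfold line, diff; simpl; f_equal; ring. Qed.

Lemma line_conv z x y r t : dist5 x z <= r -> dist5 y z <= r -> 0 <= t <= 1 ->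
  dist5 (line y (diff x y) t) z <= r.
Proof.
  intros Hx Hy Ht. apply dist5_le; unfold line, diff; simpl;
  apply conv_coord; auto;
  [apply Rle_trans with (dist5 y z); auto; apply (coord_le 0)|apply Rle_trans with (dist5 x z); auto; apply (coord_le 0)
  |apply Rle_trans with (dist5 y z); auto; apply (coord_le 1)|apply Rle_trans with (dist5 x z); auto; apply (coord_le 1)
  |apply Rle_trans with (dist5 y z); auto; apply (coord_le 2)|apply Rle_trans with (dist5 x z); auto; apply (coord_le 2)
  |apply Rle_trans with (dist5 y z); auto; apply (coord_le 3)|apply Rle_trans with (dist5 x z); auto; apply (coord_le 3)
  |apply Rle_trans with (dist5 y z); auto; apply (coord_le 4)|apply Rle_trans with (dist5 x z); auto; apply (coord_le 4)].
Qed.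

Lemma near_list (l : list E) (x : pt5) (eta : R) : 0 < eta -> (forall e, In e l -> dom e x) ->
  exists d, 0 < d /\ forall y, dist5 x y < d -> forall e, In e l -> dom e y /\ Rabs (eval e y - eval e x) < eta.
Proof.
  intros Heta. induction l as [|e l IH]; intro Hl.
  - exists 1; split; [lra|]. intros y _ e [].
  - destruct IH as [d1 [H1 H1']]. intros e' He'; apply Hl; right; auto.
    assert (Hex : dom e x) by (apply Hl; left; auto).
    destruct (dom_open e x Hex) as [d2 [H2 H2']].
    destruct (eval_cont e x Hex eta Heta) as [d3 [H3 H3']].
    exists (Rmin d1 (Rmin d2 d3)). split. repeat apply Rmin_pos; auto.
    intros y Hy e' [<-|He'].
    + split. apply H2'. eapply Rlt_le_trans; [exact Hy|]. eapply Rle_trans; [apply Rmin_r|apply Rmin_l].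
      apply H3'. eapply Rlt_le_trans; [exact Hy|]. eapply Rle_trans; [apply Rmin_r|apply Rmin_r].
    + apply H1'; auto. eapply Rlt_le_trans; [exact Hy|apply Rmin_l].
Qed.


Lemma Ge_ex : {g : nat -> E | forall i, g i = deriv i eRC}.
Proof. exists (fun i => deriv i eRC). reflexivity. Qed.
Definition Ge : nat -> E := proj1_sig Ge_ex.
Lemma Ge_eq i : Ge i = deriv i eRC.
Proof. exact (proj2_sig Ge_ex i). Qed.
Definition HH (k j : nat) := deriv j (Ge k).
Definition TT (k j l : nat) := deriv l (HH k j).

Definition hval (k j : nat) : R :=
  match k, j with
  | 0%nat, 0%nat => 48 | 0%nat, 1%nat => -16 | 0%nat, 2%nat => 4/3 | 0%nat, 3%nat => -8
  | 1%nat, 0%nat => -16 | 1%nat, 1%nat => 48 | 1%nat, 2%nat => 4/3 | 1%nat, 3%nat => 8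
  | 2%nat, 0%nat => 4/3 | 2%nat, 1%nat => 4/3 | 2%nat, 2%nat => 7/9 | 2%nat, 3%nat => -2/3
  | _, _ => 0 end.

Lemma ev_val e r v : evQ e = Some r -> Q2R r = v -> eval e x0 = v.
Proof. intros H <-. apply (evQ_ok e r H). Qed.

Lemma dom_x0 : dom eRC x0.
Proof. apply (proj1 (evQ_ok eRC 8%Q ltac:(vm_compute; reflexivity))). Qed.

Lemma G_x0 i : (i < 3)%nat -> eval (Ge i) x0 = 0.
Proof.
  intro Hi. rewrite Ge_eq. destruct i as [|[|[|i]]]; try lia;
  (apply (ev_val _ 0%Q); [vm_compute; reflexivity|unfold Q2R; simpl; field]).
Qed.

Lemma H_x0 k j : (k < 3)%nat -> (j < 4)%nat -> eval (HH k j) x0 = hval k j.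
Proof.
  intros Hk Hj. unfold HH. rewrite Ge_eq. destruct k as [|[|[|k]]]; try lia; destruct j as [|[|[|[|j]]]]; try lia;
  (eapply ev_val; [vm_compute; reflexivity|unfold Q2R, hval; simpl; field]).
Qed.

Lemma dom_all e : In e (eRC :: nil) -> dom e x0.
Proof. intros [<-|[]]. apply dom_x0. Qed.

Lemma partial_local i f g x l U : (i < 5)%nat -> open5 U -> U x -> (forall y, U y -> f y = g y) ->
  partial i f x l -> partial i g x l.
Proof.
  intros Hi HU Hx Heq Hp. destruct (HU x Hx) as [d1 [H1 H1']].
  unfold partial. apply dpl_local with (f := fun h => f (shift i h x)) (r := d1); auto.
  intros s Hs. apply Heq. apply H1'. eapply Rle_lt_trans; [apply dist_shift; auto|].
  rewrite Rminus_0_r in Hs; auto.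
Qed.

Definition UU (x : pt5) : Prop := dom eRC x.

Lemma UU_open : open5 UU.
Proof. intros x Hx. apply (dom_open eRC x Hx). Qed.

Lemma part1 : exists U : pt5 -> Prop, open5 U /\ U x0 /\ smooth_on U RCpt.
Proof.
  exists UU. split; [apply UU_open|]. split; [apply dom_x0|].
  intro k. apply Ck_ext with (f := eval eRC). apply UU_open.
  intros x Hx; symmetry; apply RC_eq; auto. apply eval_Ck. auto.
Qed.

Lemma partial_RC i x : (i < 5)%nat -> UU x -> partial i RCpt x (eval (Ge i) x).
Proof.
  intros Hi Hx. apply partial_local with (f := eval eRC) (U := UU); auto. apply UU_open.
  intros y Hy; symmetry; apply RC_eq; auto. rewrite Ge_eq. apply partial_eval; auto.
Qed.

Lemma part2 : forall i, (i < 3)%nat -> partial i RCpt x0 0.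
Proof. intros i Hi. rewrite <- (G_x0 i Hi). apply partial_RC. lia. apply dom_x0. Qed.

Lemma part3 : exists (U : pt5 -> Prop) (D : nat -> pt5 -> R),
      open5 U /\ U x0 /\
      (forall i x, (i < 3)%nat -> U x -> partial i RCpt x (D i x)) /\
      (forall i j, (i < 3)%nat -> (j < 3)%nat -> partial j (D i) x0 (Hess i j)).
Proof.
  exists UU, (fun i => eval (Ge i)). split; [apply UU_open|]. split; [apply dom_x0|]. split.
  - intros i x Hi Hx. apply partial_RC. lia. auto.
  - intros i j Hi Hj.
    replace (Hess i j) with (eval (HH i j) x0).
    + unfold HH. apply partial_eval. lia. rewrite Ge_eq. apply dom_deriv, dom_x0.
    + rewrite H_x0 by lia. destruct i as [|[|[|i]]]; try lia; destruct j as [|[|[|j]]]; try lia; reflexivity.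
Qed.

Lemma dist5_refl x : dist5 x x = 0.
Proof. unfold dist5. rewrite !Rminus_diag, !Rabs_R0. unfold Rmax; repeat (destruct (Rle_dec _ _)); reflexivity. Qed.

Lemma Rabs_le_inv a b : Rabs a <= b -> - b <= a <= b.
Proof. intro H. destruct (Rcase_abs a); [rewrite Rabs_left in H|rewrite Rabs_right in H]; lra. Qed.

Lemma pbd u w e v eta : Rabs (e - v) < eta ->
  v * (u * w) - eta * (u * u + w * w) / 2 <= u * (w * e) <= v * (u * w) + eta * (u * u + w * w) / 2.
Proof.
  intro H. assert (Hp : Rabs (u * (w * e) - v * (u * w)) <= eta * (u * u + w * w) / 2).
  { replace (u * (w * e) - v * (u * w)) with ((u * w) * (e - v)) by ring. rewrite Rabs_mult.
    assert (Huw : Rabs (u * w) <= (u * u + w * w) / 2).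
    { apply Rabs_le. pose proof (Rle_0_sqr (u+w)); pose proof (Rle_0_sqr (u-w)); unfold Rsqr in *. split; nra. }
    assert (0 <= Rabs (e - v)) by apply Rabs_pos. assert (0 <= Rabs (u * w)) by apply Rabs_pos.
    nra. }
  apply Rabs_le_inv in Hp. lra.
Qed.

Definition L2 : list E :=
  eRC :: HH 0 0 :: HH 0 1 :: HH 0 2 :: HH 1 0 :: HH 1 1 :: HH 1 2 :: HH 2 0 :: HH 2 1 :: HH 2 2 :: nil.

Lemma L2_dom e : In e L2 -> dom e x0.
Proof.
  intro H. pose proof dom_x0 as D.
  repeat (destruct H as [<-|H]; [try apply D; unfold HH; rewrite Ge_eq; apply dom_deriv, dom_deriv, D|]). destruct H.
Qed.

Lemma dist5_nonneg x y : 0 <= dist5 x y.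
Proof. apply Rle_trans with (Rabs (proj 0 x - proj 0 y)); [apply Rabs_pos|apply coord_le]. Qed.

Lemma seg_ball x d t : dist5 x x0 < d -> 0 <= t <= 1 -> dist5 x0 (line x0 (diff x x0) t) < d.
Proof.
  intros Hx Ht. rewrite dist5_sym. eapply Rle_lt_trans; [|exact Hx].
  apply line_conv; auto. apply Rle_refl. rewrite dist5_refl. apply dist5_nonneg.
Qed.

Lemma part4 : exists d, 0 < d /\ forall x, ca x = 0 -> ceps x = 0 -> dist5 x x0 < d ->
      RCpt x0 <= RCpt x.
Proof.
  destruct (near_list L2 x0 (1/20) ltac:(lra) L2_dom) as [d [Hd Hd']].
  exists d. split; auto. intros x Ha He Hx.
  set (h := diff x x0).
  assert (Hdom : forall t, 0 <= t <= 1 -> dom eRC (line x0 h t)).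
  { intros t Ht. apply (Hd' _ (seg_ball x d t Hx Ht)). left; auto. }
  destruct (mvt2 eRC x0 h Hdom) as [c [c' [Hc [Hc' Heq]]]].
  rewrite (RC_eq x0 dom_x0), (RC_eq x) by (rewrite <- (line_diff1 x x0); apply Hdom; lra).
  rewrite <- (line_diff1 x x0). replace x0 with (line x0 h 0) at 1 by apply line0.
  fold h.
  assert (H1 : dsum eRC (line x0 h 0) h = 0).
  { rewrite line0. unfold dsum. rewrite <- !Ge_eq. rewrite !G_x0 by lia.
    unfold h, diff; cbn [proj ca ceps x0]. rewrite Ha, He. ring. }
  set (z := line x0 h c').
  assert (Hz : dist5 x0 z < d) by (apply seg_ball; auto; lra).
  assert (Hb : forall j l, (j < 3)%nat -> (l < 3)%nat -> In (HH j l) L2 -> Rabs (eval (HH j l) z - hval j l) < 1/20).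
  { intros j l Hj Hl Hin. destruct (Hd' z Hz _ Hin) as [_ Hlt].
    rewrite <- H_x0 by lia. auto. }
  assert (Q : 0 <= dsum2 eRC z h).
  { assert (h3 : proj 3 h = 0) by (unfold h, diff; cbn [proj ca x0]; rewrite Ha; ring).
    assert (h4 : proj 4 h = 0) by (unfold h, diff; cbn [proj ceps x0]; rewrite He; ring).
    unfold dsum2, dsum. rewrite h3, h4.
    set (h0 := proj 0 h). set (h1 := proj 1 h). set (h2 := proj 2 h).
    pose proof (pbd h0 h0 _ _ _ (Hb 0%nat 0%nat ltac:(lia) ltac:(lia) ltac:(simpl; tauto))) as P00.
    pose proof (pbd h0 h1 _ _ _ (Hb 0%nat 1%nat ltac:(lia) ltac:(lia) ltac:(simpl; tauto))) as P01.
    pose proof (pbd h0 h2 _ _ _ (Hb 0%nat 2%nat ltac:(lia) ltac:(lia) ltac:(simpl; tauto))) as P02.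
    pose proof (pbd h1 h0 _ _ _ (Hb 1%nat 0%nat ltac:(lia) ltac:(lia) ltac:(simpl; tauto))) as P10.
    pose proof (pbd h1 h1 _ _ _ (Hb 1%nat 1%nat ltac:(lia) ltac:(lia) ltac:(simpl; tauto))) as P11.
    pose proof (pbd h1 h2 _ _ _ (Hb 1%nat 2%nat ltac:(lia) ltac:(lia) ltac:(simpl; tauto))) as P12.
    pose proof (pbd h2 h0 _ _ _ (Hb 2%nat 0%nat ltac:(lia) ltac:(lia) ltac:(simpl; tauto))) as P20.
    pose proof (pbd h2 h1 _ _ _ (Hb 2%nat 1%nat ltac:(lia) ltac:(lia) ltac:(simpl; tauto))) as P21.
    pose proof (pbd h2 h2 _ _ _ (Hb 2%nat 2%nat ltac:(lia) ltac:(lia) ltac:(simpl; tauto))) as P22.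
    unfold HH, hval in *. rewrite <- !Ge_eq.
    pose proof (Rle_0_sqr (h0 + h1 + h2 / 6)). pose proof (Rle_0_sqr (h0 - h1)).
    pose proof (Rle_0_sqr (h0 + h1)). pose proof (Rle_0_sqr h2). unfold Rsqr in *.
    lra. }
  assert (0 <= c * dsum2 eRC z h) by (apply Rmult_le_pos; lra).
  fold z in Heq. lra.
Qed.


Lemma geo_small K eps : 0 <= K -> 0 < eps -> exists N, forall n, (n >= N)%nat -> K * (/2) ^ n < eps.
Proof.
  intros HK He. destruct (pow_lt_1_zero (/2) ltac:(rewrite Rabs_right; lra) (eps / (K + 1)) ltac:(apply Rdiv_lt_0_compat; lra))
    as [N HN]. exists N. intros n Hn. specialize (HN n Hn).
  rewrite Rabs_right in HN by (apply Rle_ge, pow_le; lra).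
  apply Rle_lt_trans with ((K + 1) * (/2) ^ n). apply Rmult_le_compat_r. apply pow_le; lra. lra.
  apply Rmult_lt_reg_l with (/ (K + 1)). apply Rinv_0_lt_compat; lra.
  replace (/ (K + 1) * ((K + 1) * (/ 2) ^ n)) with ((/2) ^ n) by (field; lra).
  replace (/ (K + 1) * eps) with (eps / (K + 1)) by (unfold Rdiv; ring). auto.
Qed.

Lemma le_geo u v K : 0 <= K -> (forall n, u <= v + K * (/2) ^ n) -> u <= v.
Proof.
  intros HK H. apply Rle_plus_epsilon. intros eps He. destruct (geo_small K eps HK He) as [N HN].
  specialize (H N). specialize (HN N (le_n _)). lra.
Qed.

Lemma dist5_eq x y : dist5 x y <= 0 -> x = y.
Proof.
  intro H. destruct x as [q1 p1 t1 a1 e1], y as [q2 p2 t2 a2 e2].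
  assert (Hc : forall j, Rabs (proj j (mk5 q1 p1 t1 a1 e1) - proj j (mk5 q2 p2 t2 a2 e2)) <= 0).
  { intro j. eapply Rle_trans; [apply (coord_le j)|exact H]. }
  assert (E : forall u v, Rabs (u - v) <= 0 -> u = v).
  { intros u v Huv. pose proof (Rabs_pos (u - v)). assert (Rabs (u - v) = 0) by lra.
    destruct (Rcase_abs (u - v)); [rewrite Rabs_left in H1|rewrite Rabs_right in H1]; lra. }
  f_equal; apply E; [apply (Hc 0%nat)|apply (Hc 1%nat)|apply (Hc 2%nat)|apply (Hc 3%nat)|apply (Hc 4%nat)].
Qed.

Section FP.
Variable T : pt5 -> pt5.
Variable a r : R.
Variable za : pt5.
Definition BB (x : pt5) := ca x = a /\ ceps x = 0 /\ dist5 x za <= r.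
Hypothesis Bza : BB za.
Hypothesis BT : forall x, BB x -> BB (T x).
Hypothesis Tc : forall x y, BB x -> BB y -> dist5 (T x) (T y) <= /2 * dist5 x y.

Fixpoint it (n : nat) : pt5 := match n with O => za | S m => T (it m) end.

Lemma it_B n : BB (it n).
Proof. induction n; simpl; auto. Qed.

Let D := dist5 (it 1) (it 0).

Lemma it_step n : dist5 (it (S n)) (it n) <= D * (/2) ^ n.
Proof.
  induction n. simpl. unfold D; simpl; lra.
  simpl it. eapply Rle_trans. apply Tc; [apply (it_B (S n))|apply (it_B n)]. simpl it in IHn. simpl pow. lra.
Qed.

Lemma it_cauchy n k : dist5 (it n) (it (n + k)) <= 2 * D * (/2) ^ n * (1 - (/2) ^ k).
Proof.
  induction k.
  - rewrite Nat.add_0_r, dist5_refl. simpl. lra.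
  - eapply Rle_trans. apply dist5_triang with (y := it (n + k)).
    rewrite dist5_sym with (x := it (n + k)), Nat.add_succ_r.
    pose proof (it_step (n + k)). rewrite pow_add in H. simpl pow. lra.
Qed.

Lemma D_nonneg : 0 <= D.
Proof. unfold D. apply dist5_nonneg. Qed.

Lemma it_cauchy' n m : (n <= m)%nat -> dist5 (it n) (it m) <= 2 * D * (/2) ^ n.
Proof.
  intro Hnm. replace m with (n + (m - n))%nat by lia. eapply Rle_trans; [apply it_cauchy|].
  pose proof D_nonneg. assert (0 <= (/2) ^ n) by (apply pow_le; lra).
  assert (0 <= (/2) ^ (m - n)) by (apply pow_le; lra). assert (0 <= D * (/2) ^ n) by (apply Rmult_le_pos; auto). nra.
Qed.

Lemma coord_cv j : { l : R | forall n, Rabs (proj j (it n) - l) <= 2 * D * (/2) ^ n }.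
Proof.
  destruct (R_complete (fun n => proj j (it n))) as [l Hl].
  - intros eps He. destruct (geo_small (2 * D) eps ltac:(pose proof D_nonneg; lra) He) as [N HN].
    exists N. intros n m Hn Hm. unfold Rdist.
    destruct (Nat.le_ge_cases n m) as [Hle|Hle].
    + eapply Rle_lt_trans; [apply Rle_trans with (dist5 (it n) (it m)); [rewrite Rabs_minus_sym; apply proj_dist|apply it_cauchy'; auto]|]. apply HN; auto.
    + eapply Rle_lt_trans; [apply Rle_trans with (dist5 (it m) (it n)); [apply proj_dist|apply it_cauchy'; auto]|]. apply HN; auto.
  - exists l. intro n. apply Rle_plus_epsilon. intros eps He.
    destruct (Hl eps He) as [N HN]. specialize (HN (Nat.max n N) ltac:(lia)). unfold Rdist in HN.
    pose proof (it_cauchy' n (Nat.max n N) ltac:(lia)).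
    pose proof (proj_dist j (it (Nat.max n N)) (it n)).
    rewrite dist5_sym in H0.
    replace (proj j (it n) - l) with ((proj j (it n) - proj j (it (Nat.max n N))) + (proj j (it (Nat.max n N)) - l)) by ring.
    eapply Rle_trans; [apply Rabs_triang|]. lra.
Qed.

Lemma fixpoint : exists x, BB x /\ T x = x.
Proof.
  destruct (coord_cv 0) as [l0 H0]. destruct (coord_cv 1) as [l1 H1]. destruct (coord_cv 2) as [l2 H2].
  set (xs := mk5 l0 l1 l2 a 0).
  assert (Hd : forall n, dist5 xs (it n) <= 2 * D * (/2) ^ n).
  { intro n. destruct (it_B n) as [Ha [He _]]. apply dist5_le; simpl; rewrite Rabs_minus_sym.
    apply (H0 n). apply (H1 n). apply (H2 n).
    rewrite Ha, Rminus_diag, Rabs_R0. pose proof D_nonneg; pose proof (pow_le (/2) n ltac:(lra)); nra.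
    rewrite He, Rminus_diag, Rabs_R0. pose proof D_nonneg; pose proof (pow_le (/2) n ltac:(lra)); nra. }
  assert (Bx : BB xs).
  { split; [reflexivity|split; [reflexivity|]].
    apply le_geo with (2 * D). pose proof D_nonneg; lra. intro n.
    eapply Rle_trans; [apply dist5_triang with (y := it n)|]. destruct (it_B n) as [_ [_ Hr]].
    specialize (Hd n). lra. }
  exists xs. split; auto. apply dist5_eq.
  apply le_geo with (0 + 3 * D). pose proof D_nonneg; lra. intro n.
  eapply Rle_trans; [apply dist5_triang with (y := it (S n))|].
  pose proof (Hd (S n)) as HS. rewrite dist5_sym in HS. simpl it in *. simpl pow in HS.
  pose proof (Tc xs (it n) Bx (it_B n)). pose proof (Hd n). assert (0 <= D * (/2) ^ n) by (apply Rmult_le_pos; [apply D_nonneg|apply pow_le; lra]). lra.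
Qed.
End FP.


Definition cQ (i k : nat) : Q :=
  match i, k with
  | 0%nat, 0%nat => 5#192 | 0%nat, 1%nat => 1#96 | 0%nat, 2%nat => -1#16
  | 1%nat, 0%nat => 1#96 | 1%nat, 1%nat => 5#192 | 1%nat, 2%nat => -1#16
  | 2%nat, 0%nat => -1#16 | 2%nat, 1%nat => -1#16 | _, _ => 3#2 end.

Definition Te (i : nat) : E :=
  Add (Var i) (Neg (Add (Mul (Cst (cQ i 0)) (Ge 0)) (Add (Mul (Cst (cQ i 1)) (Ge 1)) (Mul (Cst (cQ i 2)) (Ge 2))))).

Definition Tm (a : R) (z : pt5) : pt5 := mk5 (eval (Te 0) z) (eval (Te 1) z) (eval (Te 2) z) a 0.

Lemma dom_Te i z : dom eRC z -> dom (Te i) z.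
Proof. intro H. unfold Te. cbn [dom]. pose proof (fun k => dom_deriv k eRC z H) as D. rewrite !Ge_eq. exact (conj I (conj (conj I (D 0%nat)) (conj (conj I (D 1%nat)) (conj I (D 2%nat))))). Qed.

Lemma eval_Te i z : eval (Te i) z =
  proj i z - (Q2R (cQ i 0) * eval (Ge 0) z + (Q2R (cQ i 1) * eval (Ge 1) z + Q2R (cQ i 2) * eval (Ge 2) z)).
Proof. unfold Te. cbn [eval]. ring. Qed.

Lemma eval_dTe j i z : eval (deriv j (Te i)) z =
  (if Nat.eqb (idx j) (idx i) then 1 else 0)
  - (Q2R (cQ i 0) * eval (deriv j (Ge 0)) z + (Q2R (cQ i 1) * eval (deriv j (Ge 1)) z + Q2R (cQ i 2) * eval (deriv j (Ge 2)) z)).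
Proof.
  unfold Te. cbn [deriv]. repeat rewrite ?eval_add', ?eval_neg', ?eval_mul'.
  destruct (_ =? _); cbn [eval]; ring.
Qed.

Lemma Q2R_frac (n : Z) (d : positive) : Q2R (n # d) = IZR n / IZR (Zpos d).
Proof. reflexivity. Qed.

Lemma pbd2 u m e v eta : Rabs u <= m -> Rabs (e - v) < eta ->
  v * u - eta * m <= u * e <= v * u + eta * m.
Proof.
  intros Hu He. assert (Hp : Rabs (u * e - v * u) <= eta * m).
  { replace (u * e - v * u) with (u * (e - v)) by ring. rewrite Rabs_mult.
    assert (0 <= Rabs u) by apply Rabs_pos. assert (0 <= Rabs (e - v)) by apply Rabs_pos.
    rewrite Rmult_comm. apply Rmult_le_compat; lra. }
  apply Rabs_le_inv in Hp. lra.
Qed.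

Lemma BB_line a r za x y t : BB a r za x -> BB a r za y -> 0 <= t <= 1 -> BB a r za (line y (diff x y) t).
Proof.
  intros [Hxa [Hxe Hx]] [Hya [Hye Hy]] Ht. split; [|split].
  - unfold line, diff; simpl. rewrite Hxa, Hya. ring.
  - unfold line, diff; simpl. rewrite Hxe, Hye. ring.
  - apply line_conv; auto.
Qed.

Lemma contraction a r za x y :
  (forall z, BB a r za z -> dom eRC z /\
     forall k j, (k < 3)%nat -> (j < 3)%nat -> Rabs (eval (HH k j) z - hval k j) < 1/20) ->
  BB a r za x -> BB a r za y -> dist5 (Tm a x) (Tm a y) <= /2 * dist5 x y.
Proof.
  intros HB Bx By. set (m := dist5 x y). set (h := diff x y).
  assert (Hm : forall j, Rabs (proj j h) <= m).
  { intro j. unfold h, m. replace (proj j (diff x y)) with (proj j x - proj j y) by (destruct j as [|[|[|[|j]]]]; reflexivity).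
    apply coord_le. }
  assert (h3 : proj 3 h = 0) by (unfold h, diff; simpl; destruct Bx as [-> _], By as [-> _]; ring).
  assert (h4 : proj 4 h = 0) by (unfold h, diff; simpl; destruct Bx as [_ [-> _]], By as [_ [-> _]]; ring).
  assert (Hi : forall i, (i < 3)%nat -> Rabs (eval (Te i) x - eval (Te i) y) <= /2 * m).
  { intros i Hi.
    destruct (mvt1 (Te i) y h) as [c [Hc Heq]].
    { intros t Ht. apply dom_Te. apply HB. apply BB_line; auto. }
    unfold h in Heq at 1 2. rewrite line_diff1, line0 in Heq. rewrite Heq.
    assert (Bz : BB a r za (line y h c)) by (apply BB_line; auto; lra).
    destruct (HB _ Bz) as [_ Hb]. set (z := line y h c) in *.
    unfold dsum. rewrite !eval_dTe, h3, h4.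
    pose proof (pbd2 _ _ _ _ _ (Hm 0%nat) (Hb 0%nat 0%nat ltac:(lia) ltac:(lia))) as P00.
    pose proof (pbd2 _ _ _ _ _ (Hm 1%nat) (Hb 0%nat 1%nat ltac:(lia) ltac:(lia))) as P01.
    pose proof (pbd2 _ _ _ _ _ (Hm 2%nat) (Hb 0%nat 2%nat ltac:(lia) ltac:(lia))) as P02.
    pose proof (pbd2 _ _ _ _ _ (Hm 0%nat) (Hb 1%nat 0%nat ltac:(lia) ltac:(lia))) as P10.
    pose proof (pbd2 _ _ _ _ _ (Hm 1%nat) (Hb 1%nat 1%nat ltac:(lia) ltac:(lia))) as P11.
    pose proof (pbd2 _ _ _ _ _ (Hm 2%nat) (Hb 1%nat 2%nat ltac:(lia) ltac:(lia))) as P12.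
    pose proof (pbd2 _ _ _ _ _ (Hm 0%nat) (Hb 2%nat 0%nat ltac:(lia) ltac:(lia))) as P20.
    pose proof (pbd2 _ _ _ _ _ (Hm 1%nat) (Hb 2%nat 1%nat ltac:(lia) ltac:(lia))) as P21.
    pose proof (pbd2 _ _ _ _ _ (Hm 2%nat) (Hb 2%nat 2%nat ltac:(lia) ltac:(lia))) as P22.
    pose proof (Hm 0%nat). pose proof (Hm 1%nat). pose proof (Hm 2%nat).
    unfold HH, hval in *.
    apply Rabs_le.
    destruct i as [|[|[|i]]]; try lia; cbn [cQ idx Nat.eqb]; rewrite ?Q2R_frac;
    repeat match goal with H : Rabs _ <= _ |- _ => apply Rabs_le_inv in H end;
    split; lra. }
  apply dist5_le; unfold Tm; cbn [cq cp cth ca ceps].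
  - apply (Hi 0%nat). lia.
  - apply (Hi 1%nat). lia.
  - apply (Hi 2%nat). lia.
  - rewrite Rminus_diag, Rabs_R0. assert (0 <= m) by apply dist5_nonneg. lra.
  - rewrite Rminus_diag, Rabs_R0. assert (0 <= m) by apply dist5_nonneg. lra.
Qed.


Definition i3 : list nat := 0%nat :: 1%nat :: 2%nat :: nil.
Definition i4 : list nat := 0%nat :: 1%nat :: 2%nat :: 3%nat :: nil.
Definition i5 : list nat := 0%nat :: 1%nat :: 2%nat :: 3%nat :: 4%nat :: nil.

Lemma in_i3 k : (k < 3)%nat -> In k i3.
Proof. intro; destruct k as [|[|[|k]]]; simpl; try tauto; lia. Qed.
Lemma in_i4 k : (k < 4)%nat -> In k i4.
Proof. intro; destruct k as [|[|[|[|k]]]]; simpl; try tauto; lia. Qed.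
Lemma in_i5 k : (k < 5)%nat -> In k i5.
Proof. intro; destruct k as [|[|[|[|[|k]]]]]; simpl; try tauto; lia. Qed.

Definition L5 : list E := eRC :: flat_map (fun k => map (fun j => HH k j) i4) i3.
Definition L3 : list E := flat_map (fun k => flat_map (fun j => map (fun l => TT k j l) i5) i5) i3.

Lemma in_L5 k j : (k < 3)%nat -> (j < 4)%nat -> In (HH k j) L5.
Proof.
  intros Hk Hj. right. apply in_flat_map. exists k. split. apply in_i3; auto.
  apply in_map. apply in_i4; auto.
Qed.

Lemma in_L3 k j l : (k < 3)%nat -> (j < 5)%nat -> (l < 5)%nat -> In (TT k j l) L3.
Proof.
  intros Hk Hj Hl. apply in_flat_map. exists k. split. apply in_i3; auto.
  apply in_flat_map. exists j. split. apply in_i5; auto. apply in_map. apply in_i5; auto.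
Qed.

Lemma dom_HH k j x : dom eRC x -> dom (HH k j) x.
Proof. intro H. unfold HH. rewrite Ge_eq. apply dom_deriv, dom_deriv, H. Qed.
Lemma dom_TT k j l x : dom eRC x -> dom (TT k j l) x.
Proof. intro H. unfold TT. apply dom_deriv, dom_HH, H. Qed.

Lemma L5_dom e : In e L5 -> dom e x0.
Proof.
  intros [<-|H]. apply dom_x0. apply in_flat_map in H. destruct H as [k [_ H]].
  apply in_map_iff in H. destruct H as [j [<- _]]. apply dom_HH, dom_x0.
Qed.

Lemma L3_dom e : In e L3 -> dom e x0.
Proof.
  intro H. apply in_flat_map in H. destruct H as [k [_ H]]. apply in_flat_map in H. destruct H as [j [_ H]].
  apply in_map_iff in H. destruct H as [l [<- _]]. apply dom_TT, dom_x0.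
Qed.

Definition Msum (l : list E) : R := fold_right (fun e acc => Rabs (eval e x0) + 1 + acc) 0 l.

Lemma Msum_nonneg l : 0 <= Msum l.
Proof. induction l; simpl. lra. pose proof (Rabs_pos (eval a x0)). lra. Qed.

Lemma Msum_in l e : In e l -> Rabs (eval e x0) + 1 <= Msum l.
Proof.
  induction l as [|e' l IH]; intro Hin; [destruct Hin|]. destruct Hin as [<-|H]; simpl.
  - pose proof (Msum_nonneg l). lra.
  - pose proof (IH H). pose proof (Rabs_pos (eval e' x0)). lra.
Qed.

Definition Sh (h : pt5) : R := Rabs (proj 0 h) + Rabs (proj 1 h) + Rabs (proj 2 h) + Rabs (proj 3 h) + Rabs (proj 4 h).

Lemma Sh_nonneg h : 0 <= Sh h.
Proof. unfold Sh. pose proof (Rabs_pos (proj 0 h)); pose proof (Rabs_pos (proj 1 h)); pose proof (Rabs_pos (proj 2 h));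
  pose proof (Rabs_pos (proj 3 h)); pose proof (Rabs_pos (proj 4 h)). lra. Qed.

Lemma term_bd u v Mx : Rabs v <= Mx -> Rabs (u * v) <= Rabs u * Mx.
Proof. intro H. rewrite Rabs_mult. apply Rmult_le_compat_l; auto. apply Rabs_pos. Qed.

Lemma lin5 h v0 v1 v2 v3 v4 Mx : Rabs v0 <= Mx -> Rabs v1 <= Mx -> Rabs v2 <= Mx -> Rabs v3 <= Mx -> Rabs v4 <= Mx ->
  Rabs (proj 0 h * v0 + proj 1 h * v1 + proj 2 h * v2 + proj 3 h * v3 + proj 4 h * v4) <= Sh h * Mx.
Proof.
  intros. unfold Sh.
  pose proof (term_bd (proj 0 h) v0 Mx H). pose proof (term_bd (proj 1 h) v1 Mx H0).
  pose proof (term_bd (proj 2 h) v2 Mx H1). pose proof (term_bd (proj 3 h) v3 Mx H2).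
  pose proof (term_bd (proj 4 h) v4 Mx H3).
  pose proof (Rabs_triang (proj 0 h * v0 + proj 1 h * v1 + proj 2 h * v2 + proj 3 h * v3) (proj 4 h * v4)).
  pose proof (Rabs_triang (proj 0 h * v0 + proj 1 h * v1 + proj 2 h * v2) (proj 3 h * v3)).
  pose proof (Rabs_triang (proj 0 h * v0 + proj 1 h * v1) (proj 2 h * v2)).
  pose proof (Rabs_triang (proj 0 h * v0) (proj 1 h * v1)). lra.
Qed.

Lemma dsum_bd e y h Mx : (forall j, (j < 5)%nat -> Rabs (eval (deriv j e) y) <= Mx) -> Rabs (dsum e y h) <= Sh h * Mx.
Proof. intro H. unfold dsum. apply lin5; apply H; lia. Qed.

Lemma dsum2_bd e y h Mx : (forall j l, (j < 5)%nat -> (l < 5)%nat -> Rabs (eval (deriv l (deriv j e)) y) <= Mx) ->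
  Rabs (dsum2 e y h) <= Sh h * (Sh h * Mx).
Proof.
  intro H. unfold dsum2. apply lin5; apply dsum_bd; intros; apply H; lia.
Qed.


Lemma Tm_coord i z : (i < 3)%nat -> proj i (Tm 0 z) = eval (Te i) z.
Proof. intro; destruct i as [|[|[|i]]]; try lia; reflexivity. Qed.

Lemma cQ_vals :
  Q2R (cQ 0 0) = 5/192 /\ Q2R (cQ 0 1) = 1/96 /\ Q2R (cQ 0 2) = -1/16 /\
  Q2R (cQ 1 0) = 1/96 /\ Q2R (cQ 1 1) = 5/192 /\ Q2R (cQ 1 2) = -1/16 /\
  Q2R (cQ 2 0) = -1/16 /\ Q2R (cQ 2 1) = -1/16 /\ Q2R (cQ 2 2) = 3/2.
Proof. cbn [cQ]. rewrite !Q2R_frac. repeat split; field. Qed.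

Lemma Tm_move a z F : ca z = a -> ceps z = 0 -> (forall k, (k < 3)%nat -> Rabs (eval (Ge k) z) <= F) ->
  dist5 (Tm a z) z <= 13/8 * F.
Proof.
  intros Ha He HF.
  pose proof (HF 0%nat ltac:(lia)) as F0. pose proof (HF 1%nat ltac:(lia)) as F1. pose proof (HF 2%nat ltac:(lia)) as F2.
  apply Rabs_le_inv in F0, F1, F2.
  destruct cQ_vals as [c00 [c01 [c02 [c10 [c11 [c12 [c20 [c21 c22]]]]]]]].
  apply dist5_le; unfold Tm; cbn [cq cp cth ca ceps]; rewrite ?eval_Te.
  - cbn [proj]. rewrite c00, c01, c02. apply Rabs_le. split; lra.
  - cbn [proj]. rewrite c10, c11, c12. apply Rabs_le. split; lra.
  - cbn [proj]. rewrite c20, c21, c22. apply Rabs_le. split; lra.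
  - rewrite Ha, Rminus_diag, Rabs_R0. lra.
  - rewrite He, Rminus_diag, Rabs_R0. lra.
Qed.

Lemma part5 : exists a0 d C, 0 < a0 /\ 0 < d /\
     forall a, Rabs a < a0 ->
       exists x, crit_a a x /\ dist5 x (mk5 (/2) (/2) 0 a 0) < d /\
         Rabs (cq x - / 2 - a / 12) <= C * a ^ 2 /\
         Rabs (cp x - / 2 + a / 6) <= C * a ^ 2 /\
         Rabs (cth x - a) <= C * a ^ 2 /\
         (forall y, crit_a a y -> dist5 y (mk5 (/2) (/2) 0 a 0) < d -> y = x).
Proof.
  destruct (near_list L5 x0 (1/20) ltac:(lra) L5_dom) as [d1 [Hd1 Hd1']].
  destruct (near_list L3 x0 1 ltac:(lra) L3_dom) as [d3 [Hd3 Hd3']].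
  set (M := Msum L3). assert (HM : 0 <= M) by apply Msum_nonneg.
  set (dl := Rmin d1 d3). assert (Hdl : 0 < dl) by (apply Rmin_pos; auto).
  set (r := dl / 4).
  exists (r / 40), r, (20 * M).
  split; [unfold r; lra|]. split; [unfold r; lra|]. intros a Ha.
  set (za := mk5 (/2) (/2) 0 a 0).
  assert (Hball : forall z, dist5 x0 z < dl -> dom eRC z /\
     (forall k j, (k < 3)%nat -> (j < 4)%nat -> Rabs (eval (HH k j) z - hval k j) < 1/20) /\
     (forall k j l, (k < 3)%nat -> (j < 5)%nat -> (l < 5)%nat -> Rabs (eval (TT k j l) z) <= M)).
  { intros z Hz.
    assert (Hz1 : dist5 x0 z < d1) by (eapply Rlt_le_trans; [exact Hz|apply Rmin_l]).
    assert (Hz3 : dist5 x0 z < d3) by (eapply Rlt_le_trans; [exact Hz|apply Rmin_r]).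
    split; [|split].
    - apply (Hd1' z Hz1 eRC). left; auto.
    - intros k j Hk Hj. rewrite <- H_x0 by auto. apply (Hd1' z Hz1). apply in_L5; auto.
    - intros k j l Hk Hj Hl. pose proof (in_L3 k j l Hk Hj Hl) as Hin.
      destruct (Hd3' z Hz3 _ Hin) as [_ Hlt]. pose proof (Msum_in L3 _ Hin).
      pose proof (Rabs_triang_inv (eval (TT k j l) z) (eval (TT k j l) x0)). fold M in H. lra. }
  assert (Hza : dist5 x0 za <= Rabs a).
  { apply dist5_le; unfold za, x0; cbn [cq cp cth ca ceps]; rewrite ?Rminus_diag, ?Rabs_R0;
    try apply Rabs_pos. replace (0 - a) with (- a) by ring. rewrite Rabs_Ropp; lra. }
  assert (HBball : forall z, BB a r za z -> dist5 x0 z < dl).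
  { intros z [_ [_ Hz]]. eapply Rle_lt_trans; [apply dist5_triang with (y := za)|].
    rewrite dist5_sym in Hz. unfold r in *. lra. }
  assert (Tc : forall x y, BB a r za x -> BB a r za y -> dist5 (Tm a x) (Tm a y) <= /2 * dist5 x y).
  { intros x y Bx By. apply (contraction a r za); auto. intros z Bz. destruct (Hball z (HBball z Bz)) as [D1 [D2 _]].
    split; [exact D1|intros k j Hk Hj; apply D2; lia]. }
  assert (Fza : forall k, (k < 3)%nat -> Rabs (eval (Ge k) za) <= 9 * Rabs a).
  { intros k Hk. set (hz := diff za x0).
    assert (Hline : forall t, 0 <= t <= 1 -> dist5 x0 (line x0 hz t) < dl).
    { intros t Ht. apply seg_ball; auto. rewrite dist5_sym. unfold r in *. lra. }
    destruct (mvt1 (Ge k) x0 hz) as [c [Hc Heq]].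
    { intros t Ht. rewrite Ge_eq. apply dom_deriv. apply (Hball _ (Hline t Ht)). }
    unfold hz in Heq at 1 2. rewrite line_diff1, line0, G_x0 in Heq by auto.
    rewrite Rminus_0_r in Heq. rewrite Heq.
    destruct (Hball _ (Hline c ltac:(lra))) as [_ [Hb _]].
    pose proof (Hb k 3%nat Hk ltac:(lia)) as Hb3. unfold HH in Hb3.
    set (w := line x0 hz c) in *.
    assert (p0 : proj 0 hz = 0) by (unfold hz, diff, za, x0; simpl; ring).
    assert (p1 : proj 1 hz = 0) by (unfold hz, diff, za, x0; simpl; ring).
    assert (p2 : proj 2 hz = 0) by (unfold hz, diff, za, x0; simpl; ring).
    assert (p3 : proj 3 hz = a) by (unfold hz, diff, za, x0; simpl; ring).
    assert (p4 : proj 4 hz = 0) by (unfold hz, diff, za, x0; simpl; ring).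
    unfold dsum. rewrite p0, p1, p2, p3, p4.
    replace (0 * eval (deriv 0 (Ge k)) w + 0 * eval (deriv 1 (Ge k)) w + 0 * eval (deriv 2 (Ge k)) w +
      a * eval (deriv 3 (Ge k)) w + 0 * eval (deriv 4 (Ge k)) w) with (a * eval (deriv 3 (Ge k)) w) by ring.
    rewrite Rabs_mult.
    assert (Hh : Rabs (hval k 3) <= 8) by (destruct k as [|[|[|k]]]; try lia; unfold hval; apply Rabs_le; lra).
    pose proof (Rabs_triang_inv (eval (deriv 3 (Ge k)) w) (hval k 3)).
    assert (Rabs (eval (deriv 3 (Ge k)) w) <= 9) by lra.
    rewrite Rmult_comm. apply Rmult_le_compat_r. apply Rabs_pos. auto. }
  assert (Tza : dist5 (Tm a za) za <= 15 * Rabs a).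
  { eapply Rle_trans. apply Tm_move with (F := 9 * Rabs a); auto. pose proof (Rabs_pos a). lra. }
  assert (Bza : BB a r za za).
  { split; [reflexivity|split; [reflexivity|]]. rewrite dist5_refl. unfold r; lra. }
  assert (BT : forall x, BB a r za x -> BB a r za (Tm a x)).
  { intros x Bx. split; [reflexivity|split; [reflexivity|]].
    eapply Rle_trans; [apply dist5_triang with (y := Tm a za)|].
    pose proof (Tc x za Bx Bza). destruct Bx as [_ [_ Hx]]. pose proof (Rabs_pos a). unfold r in *. lra. }
  destruct (fixpoint (Tm a) a r za Bza BT Tc) as [xs [Bxs Txs]].
  assert (Fix0 : forall z, Tm a z = z -> forall k, (k < 3)%nat -> eval (Ge k) z = 0).
  { intros z Hz.
    assert (E0 : eval (Te 0) z = cq z) by (rewrite <- Hz at 2; reflexivity).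
    assert (E1 : eval (Te 1) z = cp z) by (rewrite <- Hz at 2; reflexivity).
    assert (E2 : eval (Te 2) z = cth z) by (rewrite <- Hz at 2; reflexivity).
    rewrite !eval_Te in E0, E1, E2. cbn [proj] in E0, E1, E2.
    destruct cQ_vals as [c00 [c01 [c02 [c10 [c11 [c12 [c20 [c21 c22]]]]]]]].
    rewrite c00, c01, c02 in E0. rewrite c10, c11, c12 in E1. rewrite c20, c21, c22 in E2.
    intros k Hk; destruct k as [|[|[|k]]]; try lia; lra. }
  assert (Fxs := Fix0 xs Txs).
  exists xs.
  assert (Hxs_r : dist5 xs za < r).
  { rewrite <- Txs. eapply Rle_lt_trans; [apply dist5_triang with (y := Tm a za)|].
    pose proof (Tc xs za Bxs Bza). destruct Bxs as [_ [_ Hx]]. pose proof (Rabs_pos a). unfold r in *. lra. }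
  assert (crit : crit_a a xs).
  { pose proof Bxs as [Ha' [He' _]]. split; auto. split; auto. intros i Hi.
    rewrite <- (Fxs i Hi). apply partial_RC. lia. apply (Hball _ (HBball _ Bxs)). }
  split; auto. split; auto.
  set (z' := mk5 (/2 + a/12) (/2 - a/6) a a 0).
  assert (Bz' : BB a r za z').
  { split; [reflexivity|split; [reflexivity|]]. pose proof (Rabs_pos a).
    apply dist5_le; unfold z', za; cbn [cq cp cth ca ceps]; rewrite ?Rminus_diag, ?Rabs_R0; unfold r in *; try lra.
    - replace (/2 + a/12 - /2) with (a * / 12) by field. rewrite Rabs_mult, (Rabs_right (/12)) by lra. lra.
    - replace (/2 - a/6 - /2) with (a * - / 6) by field. rewrite Rabs_mult, Rabs_Ropp, (Rabs_right (/6)) by lra. lra.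
    - replace (a - 0) with a by ring. lra. }
  assert (Fz' : forall k, (k < 3)%nat -> Rabs (eval (Ge k) z') <= 6 * M * a ^ 2).
  { intros k Hk. set (hw := diff z' x0).
    assert (Hline : forall t, 0 <= t <= 1 -> dist5 x0 (line x0 hw t) < dl).
    { intros t Ht. apply seg_ball; auto. rewrite dist5_sym. apply HBball; auto. }
    destruct (mvt2 (Ge k) x0 hw) as [c [c' [Hc [Hc' Heq]]]].
    { intros t Ht. rewrite Ge_eq. apply dom_deriv. apply (Hball _ (Hline t Ht)). }
    unfold hw in Heq at 1 2. rewrite line_diff1, line0, G_x0 in Heq by auto.
    assert (Hd0 : dsum (Ge k) (line x0 hw 0) hw = 0).
    { rewrite line0. unfold dsum. fold (HH k 0) (HH k 1) (HH k 2) (HH k 3). rewrite !H_x0 by lia.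
      unfold hw, diff, z', x0; cbn [proj cq cp cth ca ceps].
      destruct k as [|[|[|k]]]; try lia; unfold hval; field. }
    rewrite Hd0 in Heq. 
    assert (Hb2 : Rabs (dsum2 (Ge k) (line x0 hw c') hw) <= Sh hw * (Sh hw * M)).
    { apply dsum2_bd. intros j l Hj Hl. destruct (Hball _ (Hline c' ltac:(lra))) as [_ [_ H3]].
      apply (H3 k j l Hk Hj Hl). }
    assert (HS : Sh hw <= 9/4 * Rabs a).
    { unfold Sh, hw, diff, z', x0; cbn [proj cq cp cth ca ceps].
      replace (/2 + a/12 - /2) with (a * / 12) by field. replace (/2 - a/6 - /2) with (a * - / 6) by field.
      replace (a - 0) with a by ring. rewrite Rminus_diag, Rabs_R0.
      rewrite !Rabs_mult, Rabs_Ropp, (Rabs_right (/12)), (Rabs_right (/6)) by lra. lra. }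
    assert (HS0 : 0 <= Sh hw) by apply Sh_nonneg.
    assert (Sh hw * (Sh hw * M) <= 6 * M * a ^ 2).
    { assert (Sh hw * Sh hw <= (9/4 * Rabs a) * (9/4 * Rabs a)) by (apply Rmult_le_compat; auto).
      replace (a ^ 2) with (Rabs a * Rabs a) by (rewrite <- Rabs_mult; simpl; rewrite Rmult_1_r; apply Rabs_right; nra).
      nra. }
    replace (eval (Ge k) z') with (c * dsum2 (Ge k) (line x0 hw c') hw) by lra.
    rewrite Rabs_mult, (Rabs_right c) by lra.
    apply Rle_trans with (1 * Rabs (dsum2 (Ge k) (line x0 hw c') hw)).
    apply Rmult_le_compat_r; [apply Rabs_pos|lra]. lra. }
  assert (Tz' : dist5 (Tm a z') z' <= 13/8 * (6 * M * a ^ 2)) by (apply Tm_move; auto).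
  assert (Hxz : dist5 xs z' <= 20 * M * a ^ 2).
  { pose proof (Tc xs z' Bxs Bz'). rewrite Txs in H.
    pose proof (dist5_triang xs (Tm a z') z'). pose proof (pow2_ge_0 a). nra. }
  split; [|split; [|split]].
  - replace (cq xs - /2 - a/12) with (cq xs - cq z') by (unfold z'; simpl; ring).
    eapply Rle_trans; [apply (coord_le 0)|]. lra.
  - replace (cp xs - /2 + a/6) with (cp xs - cp z') by (unfold z'; simpl; ring).
    eapply Rle_trans; [apply (coord_le 1)|]. lra.
  - replace (cth xs - a) with (cth xs - cth z') by (unfold z'; simpl; ring).
    eapply Rle_trans; [apply (coord_le 2)|]. lra.
  - intros y [Hya [Hye Hyp]] Hy.
    assert (By : BB a r za y) by (split; auto; split; auto; lra).
    assert (Hdy : dom eRC y) by (apply (Hball _ (HBball _ By))).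
    assert (Gy : forall k, (k < 3)%nat -> eval (Ge k) y = 0).
    { intros k Hk. apply (uniqueness_limite (fun h => RCpt (shift k h y)) 0).
      apply partial_RC; [lia|exact Hdy]. apply Hyp; exact Hk. }
    assert (Ty : Tm a y = y).
    { destruct y as [q p t ya ye]; cbn [ca ceps] in Hya, Hye. subst ya ye.
      unfold Tm. rewrite !eval_Te, !Gy by lia. cbn [proj]. f_equal; cbn [cq cp cth]; ring. }
    symmetry. apply dist5_eq. pose proof (Tc xs y Bxs By). rewrite Txs, Ty in H.
    pose proof (dist5_nonneg xs y). lra.
Qed.


Theorem mainTheorem6 :
  (* RC (with theta = 0 meaning the straight segment) is smooth near (1/2,1/2,0;0,0) *)
  (exists U : pt5 -> Prop, open5 U /\ U x0 /\ smooth_on U RCpt) /\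
  (* at a = eps = 0, (q,p,theta) = (1/2,1/2,0) is a critical point ... *)
  (forall i, (i < 3)%nat -> partial i RCpt x0 0) /\
  (* ... with Hessian in (q,p,theta) equal to Hess ... *)
  (exists (U : pt5 -> Prop) (D : nat -> pt5 -> R),
      open5 U /\ U x0 /\
      (forall i x, (i < 3)%nat -> U x -> partial i RCpt x (D i x)) /\
      (forall i j, (i < 3)%nat -> (j < 3)%nat -> partial j (D i) x0 (Hess i j))) /\
  (* ... and it is a local minimum of RC(. ; 0, 0) *)
  (exists d, 0 < d /\ forall x, ca x = 0 -> ceps x = 0 -> dist5 x x0 < d ->
      RCpt x0 <= RCpt x) /\
  (* for eps = 0 and a small, the critical point near (1/2,1/2,0) satisfies
     (q - 1/2, p - 1/2, theta) = a (1/12, -1/6, 1) + O(a^2) *)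
  (exists a0 d C, 0 < a0 /\ 0 < d /\
     forall a, Rabs a < a0 ->
       exists x, crit_a a x /\ dist5 x (mk5 (/2) (/2) 0 a 0) < d /\
         Rabs (cq x - / 2 - a / 12) <= C * a ^ 2 /\
         Rabs (cp x - / 2 + a / 6) <= C * a ^ 2 /\
         Rabs (cth x - a) <= C * a ^ 2 /\
         (forall y, crit_a a y -> dist5 y (mk5 (/2) (/2) 0 a 0) < d -> y = x)).
Proof.
  split; [exact part1|]. split; [exact part2|]. split; [exact part3|]. split; [exact part4|]. exact part5.
Qed.
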